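(* Under the derivation $d/dt_1=d/dt_{1,1}+d/dt_{2,1}$ one has $$\frac{du}{dt_1}=\partial_1^3(u)+\partial_2^3(u)+3\partial_1(v_0u)+3\partial_2(w_0u),$$ $$\frac{dv_0}{dt_1}=\partial_1^3(v_0)+\partial_2^3(v_0)+6v_0\partial_1(v_0)+3\partial_1(uw_0)+3\partial_1(v_1),$$ and moreover $\partial_2(v_0)=\partial_1(u)$, $\partial_1(w_0)=\partial_2(u)$, where $w_0=\tau(v_0)$. Consequently, setting $v=3v_0$ (so $\tau(v)=3w_0$), $u$ satisfies the Novikov–Veselov equation $\frac{du}{dt_1}=\partial_1^3u+\partial_2^3u+\partial_1(uv)+\partial_2(u\,\tau(v))$ with $3\partial_1u=\partial_2v$.
   Context: Let $\mathcal{A}$ be the commutative $\mathbb{C}$-algebra of differential polynomials generated by $u$, $(v_i)_{i\ge0}$, $(w_j)_{j\ge0}$ and their jets under two commuting derivations $\partial_1,\partial_2$, subject to $\partial_2(\mathcal{L}_1)=[\mathcal{L}_1,\partial_1^{-1}u]$ and $\partial_1(\mathcal{L}_2)=[\mathcal{L}_2,\partial_2^{-1}u]$, where $\mathcal{L}_1=\partial_1^{-1}(\partial_1^2+v_0+\partial_1^{-1}v_1\partial_1^{-1}+\cdots)$, $\mathcal{L}_2=\partial_2^{-1}(\partial_2^2+w_0+\partial_2^{-1}w_1\partial_2^{-1}+\cdots)$, with $\partial_2(\mathcal{L}_1)$ (resp. $\partial_1(\mathcal{L}_2)$) meaning the derivation applied coefficientwise. Adjoint: anti-automorphism with $\partial_i^*=-\partial_i$,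 $a^*=a$. $\mathcal{H}=\partial_1\partial_2+u$, $A_{i,n}=(\mathcal{L}_i^{2n+1})_+$ (nonnegative-power part). For $\mathcal{P}\in\mathcal{A}[\partial_2]((\partial_1^{-1}))$, ''$\mathcal{P}\ \mathrm{mod}\ \mathcal{H}$'' is the unique element of $\mathcal{A}((\partial_1^{-1}))$ of the form $\mathcal{P}-\mathcal{Q}\mathcal{H}$, $\mathcal{Q}\in\mathcal{A}[\partial_2]((\partial_1^{-1}))$ (symmetrically with $1,2$ swapped). The $d/dt_{i,n}$ are the evolutionary derivations of $\mathcal{A}$ (commuting with $\partial_1,\partial_2$) defined by $d\mathcal{L}_i/dt_{i,n}=[A_{i,n},\mathcal{L}_i]$, $d\mathcal{L}_1/dt_{2,n}=[A_{2,n},\mathcal{L}_1]\ \mathrm{mod}\ \mathcal{H}$, $d\mathcal{L}_2/dt_{1,n}=[A_{1,n},\mathcal{L}_2]\ \mathrm{mod}\ \mathcal{H}$, $du/dt_{i,n}=-A_{i,n}^*(u)$. $\tau$ is the $\mathbb{R}$-algebra involution of $\mathcal{A}$ conjugating scalars and sending $\partial_1^n(v_i)\mapsto\partial_2^n(w_i)$, $\partial_2^n(w_j)\mapsto\partial_1^n(v_j)$, $\partial_1^p\partial_2^q(u)\mapsto\partial_1^q\partial_2^p(u)$. *)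

(* Defs.v *)
From HB Require Import structures.
From mathcomp Require Import all_boot all_algebra.
From mathcomp Require Import complex.
From mathcomp Require Import reals.
Set Implicit Arguments. Unset Strict Implicit. Unset Printing Implicit Defensive.
Import GRing.Theory Num.Theory.
Local Open Scope ring_scope.

(* Generalized binomial coefficient C(m, j) = m(m-1)...(m-j+1)/j!, m : int. *)
(*   C(n, j) for n >= 0 ; C(-(n+1), j) = (-1)^j C(n+j, j).                  *)
Definition binz (m : int) (j : nat) : int :=
  match m with
  | Posz n => ('C(n, j))%:Z
  | Negz n => (-1) ^+ j * ('C(j + n, j))%:Z
  end.

Section PseudoDifferential.
Variable A : comPzRingType.

(* Psd o c  represents   \sum_{s >= 0} c s  d^(o - s).                      *)
(* Operators are compared through their coefficient functions [coef].       *)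
Record psd := Psd { pord : int; pcf : nat -> A }.

Definition coef (P : psd) (m : int) : A :=
  match (pord P - m)%R with Posz s => pcf P s | Negz _ => 0 end.

Definition psd_of (o : int) (f : int -> A) : psd := Psd o (fun s => f (o - s%:Z)).

Definition padd (P Q : psd) : psd :=
  psd_of (Num.max (pord P) (pord Q)) (fun m => coef P m + coef Q m).
Definition popp (P : psd) : psd := Psd (pord P) (fun s => - pcf P s).
Definition psub (P Q : psd) : psd := padd P (popp Q).

Definition pconst (a : A) : psd := Psd 0 (fun s => if s is 0%N then a else 0).
Definition pmon (m : int) : psd := Psd m (fun s => if s is 0%N then 1 else 0).

(* product, via  d^m b = \sum_j C(m,j) d^j(b) d^(m-j)  *)
Definition pmul (d : A -> A) (P Q : psd) : psd :=
  Psd (pord P + pord Q)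
    (fun s => \sum_(i < s.+1) \sum_(j < s.+1 - i)
        (pcf P i * iter j d (pcf Q (s - i - j)%N)) *~ binz (pord P - i%:Z) j).

Definition pcomm (d : A -> A) (P Q : psd) : psd := psub (pmul d P Q) (pmul d Q P).

Definition ppow (d : A -> A) (P : psd) (n : nat) : psd := iter n (pmul d P) (pmon 0).

Definition pmap (f : A -> A) (P : psd) : psd := Psd (pord P) (fun s => f (pcf P s)).

Definition pplus (P : psd) : psd :=
  psd_of (pord P) (fun m => if (0 <= m)%R then coef P m else 0).

(* For a differential operator P = \sum_{k>=0} a_k d^k, its adjoint
   P^* = \sum_k (-d)^k o a_k applied to f, i.e. P^*(f) = \sum_k (-1)^k d^k(a_k f). *)
Definition padj_app (d : A -> A) (P : psd) (f : A) : A :=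
  \sum_(k < `|pord P|.+1) (-1) ^+ k * iter k d (coef P k%:Z * f).

(* Psd2 o n c represents \sum_{s>=0} \sum_{k<=n} c s k d^(o-s) e^k.         *)
Record psd2 := Psd2 { qord : int; qdeg : nat; qcf : nat -> nat -> A }.

Definition coef2 (P : psd2) (m : int) (k : nat) : A :=
  if (k <= qdeg P)%N then
    match (qord P - m)%R with Posz s => qcf P s k | Negz _ => 0 end
  else 0.

Definition q_of (o : int) (n : nat) (f : int -> nat -> A) : psd2 :=
  Psd2 o n (fun s k => f (o - s%:Z) k).

Definition qadd (P Q : psd2) : psd2 :=
  q_of (Num.max (qord P) (qord Q)) (maxn (qdeg P) (qdeg Q))
       (fun m k => coef2 P m k + coef2 Q m k).
Definition qopp (P : psd2) : psd2 := Psd2 (qord P) (qdeg P) (fun s k => - qcf P s k).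
Definition qsub (P Q : psd2) : psd2 := qadd P (qopp Q).

(* product, via (a d^m e^k)(b d^n e^l)
     = \sum_{i,j} C(m,i) C(k,j) a d^i(e^j(b)) d^(m+n-i) e^(k+l-j) *)
Definition qmul (d e : A -> A) (P Q : psd2) : psd2 :=
  Psd2 (qord P + qord Q) (qdeg P + qdeg Q)
    (fun s r => \sum_(sp < s.+1) \sum_(i < s.+1 - sp)
        \sum_(kp < (qdeg P).+1) \sum_(j < kp.+1) \sum_(lq < (qdeg Q).+1)
          if (kp - j + lq == r)%N then
            (qcf P sp kp * iter i d (iter j e (qcf Q (s - sp - i)%N lq)))
              *~ (binz (qord P - sp%:Z) i * ('C(kp, j))%:Z)
          else 0).

Definition qcomm (d e : A -> A) (P Q : psd2) : psd2 := qsub (qmul d e P Q) (qmul d e Q P).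

Definition ser2 (P : psd) : psd2 :=
  Psd2 (pord P) 0 (fun s k => if k is 0%N then pcf P s else 0).

(* embedding of a differential operator \sum_{k>=0} a_k e^k (given as an
   element of A((e^{-1})) with no negative powers, e.g. (L)_+) into A[e]((d^{-1})) *)
Definition poly2 (P : psd) : psd2 :=
  Psd2 0 `|pord P| (fun s k => if s is 0%N then coef P k%:Z else 0).

(* H = d e + u  (= d_1 d_2 + u) *)
Definition H2 (u : A) : psd2 :=
  Psd2 1 1 (fun s k => match s, k with
                       | 0%N, 1%N => 1
                       | 1%N, 0%N => u
                       | _, _ => 0 end).

Definition modH (d e : A -> A) (u : A) (P : psd2) (Q : psd) : Prop :=
  exists X : psd2, forall m k,
    coef2 P m k = coef2 (qadd (ser2 Q) (qmul d e X (H2 u))) m k.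

(*   K = d^2 + v_0 + d^{-1} v_1 d^{-1} + ... = d^2 + \sum_i d^{-i} v_i d^{-i}, *)
(* d^{-i} v d^{-i} = \sum_j C(-i,j) d^j(v) d^{-2i-j}.                       *)
Definition Kop (d : A -> A) (v : nat -> A) : psd :=
  Psd 2 (fun s => if s is 0%N then 1 else
     \sum_(i < s | (2 * i + 2 <= s)%N)
        iter (s - 2 - 2 * i) d (v i) *~ binz (- (i%:Z)) (s - 2 - 2 * i)).

Definition Lop (d : A -> A) (v : nat -> A) : psd := pmul d (pmon (-1)) (Kop d v).

Definition Aop (d : A -> A) (v : nat -> A) (n : nat) : psd :=
  pplus (ppow d (Lop d v) (2 * n + 1)).

Definition lax_relation (d e : A -> A) (u : A) (v : nat -> A) : Prop :=
  forall m, coef (pmap e (Lop d v)) m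
          = coef (pcomm d (Lop d v) (pmul d (pmon (-1)) (pconst u))) m.

(* The flow t_{a,n} where a is the index of (da, va) and b the other index:
     dL_a/dt = [A_{a,n}, L_a],
     dL_b/dt = [A_{a,n}, L_b] mod H      (computed in A[da]((db^{-1}))),
     du/dt   = - A_{a,n}^*(u).                                          *)
Definition lax_flow (da db : A -> A) (u : A) (va vb : nat -> A)
    (D : A -> A) (n : nat) : Prop :=
  [/\ forall m, coef (pmap D (Lop da va)) m
              = coef (pcomm da (Aop da va n) (Lop da va)) m,
      exists Q, modH db da u (qcomm db da (poly2 (Aop da va n)) (ser2 (Lop db vb))) Q
                /\ forall m, coef (pmap D (Lop db vb)) m = coef Q m
    & D u = - padj_app da (Aop da va n) u].

End PseudoDifferential.

Definition is_derivation (C : pzRingType) (A : comAlgType C) (D : A -> A) : Prop :=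
  [/\ forall a b, D (a + b) = D a + D b,
      forall a b, D (a * b) = D a * b + a * D b
    & forall (c : C) a, D (c *: a) = c *: D a].

(* Main.v *)
Require Import Defs.
From HB Require Import structures.
From mathcomp Require Import all_boot all_algebra.
From mathcomp Require Import complex.
From mathcomp Require Import reals.
Import GRing.Theory Num.Theory.
Local Open Scope ring_scope.
From mathcomp Require Import all_order ring zify.
Require Import Defs.
Import Order.TTheory GRing.Theory Num.Theory.
Set Implicit Arguments. Unset Strict Implicit.
Local Open Scope ring_scope.

Section Coef.
Variable A : comPzRingType.

Lemma coefE (P : psd A) m s : pord P - m = s%:Z -> coef P m = pcf P s.
Proof. by rewrite /coef => ->. Qed.

Lemma coef_gt (P : psd A) m : pord P < m -> coef P m = 0.
Proof. rewrite /coef => h; case E: (pord P - m) => [s|s] //; exfalso; lia. Qed.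

Lemma coef_psd_of o (f : int -> A) m : coef (psd_of o f) m = if m <= o then f m else 0.
Proof.
rewrite /coef /psd_of /=; case: ifP => h; case E: (o - m) => [s|s] //=; try lia.
by congr f; lia.
Qed.

Lemma coef_padd (P Q : psd A) m : coef (padd P Q) m = coef P m + coef Q m.
Proof.
rewrite /padd coef_psd_of le_max; case: ifP => // /negbT; rewrite negb_or -!ltNge.
by case/andP => h1 h2; rewrite !coef_gt ?addr0.
Qed.

Lemma coef_popp (P : psd A) m : coef (popp P) m = - coef P m.
Proof. by rewrite /coef /=; case: (pord P - m) => s //; rewrite oppr0. Qed.

Lemma coef_pcomm d (P Q : psd A) m :
  coef (pcomm d P Q) m = coef (pmul d P Q) m - coef (pmul d Q P) m.
Proof. by rewrite /pcomm /psub coef_padd coef_popp. Qed.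

Lemma coef_pplus (P : psd A) m : coef (pplus P) m = if 0 <= m then coef P m else 0.
Proof.
rewrite /pplus coef_psd_of; case: ifP => // /negbT; rewrite -ltNge => h.
by case: ifP => // _; rewrite coef_gt.
Qed.

Lemma pord_pplus (P : psd A) : pord (pplus P) = pord P. Proof. by []. Qed.

Lemma coef_pmap f (P : psd A) m s : pord P - m = s%:Z -> coef (pmap f P) m = f (pcf P s).
Proof. by rewrite /coef /= => ->. Qed.

Lemma coef2E (P : psd2 A) m k s : (k <= qdeg P)%N -> qord P - m = s%:Z -> coef2 P m k = qcf P s k.
Proof. by rewrite /coef2 => -> ->. Qed.

Lemma coef2_gt (P : psd2 A) m k : qord P < m -> coef2 P m k = 0.
Proof. rewrite /coef2 => h; case: ifP => // _; case E: (qord P - m) => [s|s] //; exfalso; lia. Qed.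

Lemma coef2_gtk (P : psd2 A) m k : (qdeg P < k)%N -> coef2 P m k = 0.
Proof. by rewrite /coef2 => h; case: ifP => //; rewrite leqNgt h. Qed.

Lemma coef2_q_of o n (f : int -> nat -> A) m k :
  coef2 (q_of o n f) m k = if (m <= o) && (k <= n)%N then f m k else 0.
Proof.
rewrite /coef2 /q_of /=; case: (k <= n)%N; rewrite ?andbT ?andbF //.
case: ifP => h; case E: (o - m) => [s|s] //=; try lia.
by congr f; lia.
Qed.

Lemma coef2_qadd (P Q : psd2 A) m k : coef2 (qadd P Q) m k = coef2 P m k + coef2 Q m k.
Proof.
rewrite /qadd coef2_q_of le_max leq_max; case: ifP => // /negbT.
rewrite negb_and => /orP[/norP[h1 h2]|/norP[h1 h2]].
- by rewrite !coef2_gt ?addr0 // ltNge.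
- by rewrite !coef2_gtk ?addr0 // ltnNge.
Qed.

Lemma coef2_qopp (P : psd2 A) m k : coef2 (qopp P) m k = - coef2 P m k.
Proof. by rewrite /coef2 /=; case: ifP; rewrite ?oppr0 //; case: (qord P - m) => s //; rewrite oppr0. Qed.

Lemma coef2_qcomm d e (P Q : psd2 A) m k :
  coef2 (qcomm d e P Q) m k = coef2 (qmul d e P Q) m k - coef2 (qmul d e Q P) m k.
Proof. by rewrite /qcomm /qsub coef2_qadd coef2_qopp. Qed.

Lemma coef2_ser2_0 (Q : psd A) m : coef2 (ser2 Q) m 0 = coef Q m.
Proof. by []. Qed.
Lemma coef2_ser2_S (Q : psd A) m k : coef2 (ser2 Q) m k.+1 = 0.
Proof. by []. Qed.
End Coef.

Ltac is_nat c := lazymatch c with O => idtac | S ?x => is_nat x end.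
Ltac is_intc c := lazymatch c with Posz ?n => is_nat n | Negz ?n => is_nat n end.
Ltac is_boolc c := lazymatch c with true => idtac | false => idtac end.

Ltac cstep :=
  match goal with
  | |- context [binz ?a ?b] => let c := eval vm_compute in (binz a b) in is_intc c; change (binz a b) with c
  | |- context [bump ?a ?b] => let c := eval vm_compute in (bump a b) in is_nat c; change (bump a b) with c
  | |- context [(?a - ?b)%N] => let c := eval vm_compute in (a - b)%N in is_nat c; change (a - b)%N with c
  | |- context [(?a + ?b)%N] => let c := eval vm_compute in (a + b)%N in is_nat c; change (a + b)%N with c
  | |- context [(?a * ?b)%N] => let c := eval vm_compute in (a * b)%N in is_nat c; change (a * b)%N with c
  | |- context [(?a <= ?b)%N] => let c := eval vm_compute in (a <= b)%N in is_boolc c; change (a <= b)%N with c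
  | |- context [(?a == ?b :> nat)] => let c := eval vm_compute in (a == b) in is_boolc c; change (a == b) with c
  | |- context [binomial ?a ?b] => let c := eval vm_compute in (binomial a b) in is_nat c; change (binomial a b) with c
  | |- context [absz ?a] => let c := eval vm_compute in (absz a) in is_nat c; change (absz a) with c
  | |- context [(?a - ?b)%R : int] => let c := eval vm_compute in ((a - b)%R : int) in is_intc c; change ((a - b)%R : int) with c
  | |- context [(?a + ?b)%R : int] => let c := eval vm_compute in ((a + b)%R : int) in is_intc c; change ((a + b)%R : int) with c
  end.

Ltac expand := repeat (first [ progress (repeat cstep) | rewrite big_ord0 | rewrite big_ord_recl | rewrite big_mkcond | progress simpl ]).

Section Gen.
Variable A : comPzRingType.
Variable d : A -> A.
Hypothesis dD : forall a b, d (a + b) = d a + d b.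
Hypothesis dM : forall a b, d (a * b) = d a * b + a * d b.

Lemma d0 : d 0 = 0.
Proof. have H := dD 0 0; rewrite addr0 in H.
have : d 0 - d 0 = d 0 + d 0 - d 0 by rewrite -H.
by rewrite subrr addrK. Qed.
Lemma dN a : d (- a) = - d a.
Proof. by apply/eqP; rewrite -subr_eq0 opprK -dD addNr d0. Qed.
Lemma dMn a n : d (a *+ n) = d a *+ n.
Proof. by elim: n => [|n IH]; rewrite ?mulr0n ?d0 // !mulrS dD IH. Qed.
Lemma dMz a z : d (a *~ z) = d a *~ z.
Proof. by case: z => n /=; rewrite ?dN dMn. Qed.
Lemma der1 : d 1 = 0.
Proof. have H := dM 1 1; rewrite !mul1r mulr1 in H.
have : d 1 - d 1 = d 1 + d 1 - d 1 by rewrite -H.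
by rewrite subrr addrK. Qed.

Ltac dnorm := rewrite ?(dD, dN, dMz, dMn, dM, d0, der1).

Variable v : nat -> A.
Arguments Lop : simpl never.
Arguments coef : simpl never.

Lemma pordL : pord (Lop d v) = 1. Proof. by []. Qed.
Lemma pcfL0 : pcf (Lop d v) 0 = 1.
Proof. rewrite /Lop /=; expand; dnorm; ring. Qed.
Lemma pcfL1 : pcf (Lop d v) 1 = 0.
Proof. rewrite /Lop /=; expand; dnorm; ring. Qed.
Lemma pcfL2 : pcf (Lop d v) 2 = v 0.
Proof. rewrite /Lop /=; expand; dnorm; ring. Qed.
Lemma pcfL3 : pcf (Lop d v) 3 = - d (v 0).
Proof. rewrite /Lop /=; expand; dnorm; ring. Qed.
Lemma pcfL4 : pcf (Lop d v) 4 = v 1%N + d (d (v 0)).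
Proof. rewrite /Lop /=; expand; dnorm; ring. Qed.
Lemma pcfL5 : pcf (Lop d v) 5 = - d (v 1%N) *+ 2 - d (d (d (v 0))).
Proof. rewrite /Lop /=; expand; dnorm; ring. Qed.


Lemma sq_gen (P : psd A) : pord P = 1 -> pcf P 0 = 1 -> pcf P 1 = 0 -> pcf P 2 = v 0 ->
  pcf P 3 = - d (v 0) ->
  let Q := pmul d P (pmul d P (pmon A 0)) in
  [/\ pcf Q 0 = 1, pcf Q 1 = 0, pcf Q 2 = v 0 *+ 2 & pcf Q 3 = - d (v 0)].
Proof.
move=> hP h0 h1 h2 h3 /=; rewrite hP; split; expand; rewrite ?h0 ?h1 ?h2 ?h3; dnorm; ring.
Qed.

Lemma cube_gen (P Q : psd A) : pord P = 1 -> pcf P 0 = 1 -> pcf P 1 = 0 -> pcf P 2 = v 0 ->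
  pcf P 3 = - d (v 0) ->
  pcf Q 0 = 1 -> pcf Q 1 = 0 -> pcf Q 2 = v 0 *+ 2 -> pcf Q 3 = - d (v 0) ->
  let R := pmul d P Q in
  [/\ pcf R 0 = 1, pcf R 1 = 0, pcf R 2 = v 0 *+ 3 & pcf R 3 = 0].
Proof.
move=> hP h0 h1 h2 h3 g0 g1 g2 g3 /=; rewrite hP; split; expand;
 rewrite ?h0 ?h1 ?h2 ?h3 ?g0 ?g1 ?g2 ?g3; dnorm; ring.
Qed.

Lemma pcf_cube : let R := ppow d (Lop d v) 3 in
  [/\ pcf R 0 = 1, pcf R 1 = 0, pcf R 2 = v 0 *+ 3 & pcf R 3 = 0].
Proof.
have [q0 q1 q2 q3] := sq_gen pordL pcfL0 pcfL1 pcfL2 pcfL3.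
exact: (cube_gen pordL pcfL0 pcfL1 pcfL2 pcfL3 q0 q1 q2 q3).
Qed.

Lemma pordA : pord (Aop d v 1) = 3. Proof. by []. Qed.

Lemma coefA : let B := Aop d v 1 in
  [/\ coef B 0 = 0, coef B 1 = v 0 *+ 3, coef B 2 = 0 & coef B 3 = 1].
Proof.
have [c0 c1 c2 c3] := pcf_cube.
rewrite /Aop; have -> : (2 * 1 + 1 = 3)%N by [].
split; rewrite coef_pplus /=.
- by rewrite (@coefE _ _ _ 3).
- by rewrite (@coefE _ _ _ 2).
- by rewrite (@coefE _ _ _ 1).
- by rewrite (@coefE _ _ _ 0).
Qed.

End Gen.

Arguments coef : simpl never.

Section Gen3.
Variable A : comPzRingType.
Variable d : A -> A.
Hypothesis dD : forall a b, d (a + b) = d a + d b.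
Hypothesis dM : forall a b, d (a * b) = d a * b + a * d b.
Ltac dnorm := repeat progress (rewrite ?dD ?(dN dD) ?(dMz dD) ?(dMn dD) ?dM ?(d0 dD) ?(der1 dM)).
Variable v : nat -> A.

Lemma padjA (u : A) : padj_app d (Aop d v 1) u = - (d (d (d u)) + (d (v 0 * u)) *+ 3).
Proof.
move: (coefA dD dM v) (pordA d v); move: (Aop d v 1) => B [c0 c1 c2 c3] hB.
rewrite /padj_app hB; expand; rewrite c0 c1 c2 c3; dnorm; ring.
Qed.

Lemma pcfA : let B := Aop d v 1 in
  pcf B 0 = 1 /\ pcf B 1 = 0 /\ pcf B 2 = v 0 *+ 3 /\ pcf B 3 = 0 /\ pcf B 4 = 0 /\ pcf B 5 = 0.
Proof.
have [c0 c1 c2 c3] := coefA dD dM v.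
have E t : pcf (Aop d v 1) t = coef (Aop d v 1) (3 - t%:Z).
  by rewrite (@coefE _ _ _ t) //; rewrite pordA; lia.
cbv zeta; rewrite !E.
split; first exact: c3. split; first exact: c2. split; first exact: c1.
split; first exact: c0. split; first by rewrite coef_pplus.
by rewrite coef_pplus.
Qed.

Lemma commAL_gen (B P : psd A) : pord B = 3 -> pord P = 1 ->
  pcf B 0 = 1 -> pcf B 1 = 0 -> pcf B 2 = v 0 *+ 3 -> pcf B 3 = 0 -> pcf B 4 = 0 -> pcf B 5 = 0 ->
  pcf P 0 = 1 -> pcf P 1 = 0 -> pcf P 2 = v 0 -> pcf P 3 = - d (v 0) ->
  pcf P 4 = v 1%N + d (d (v 0)) -> pcf P 5 = - d (v 1%N) *+ 2 - d (d (d (v 0))) ->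
  pcf (pmul d B P) 5 - pcf (pmul d P B) 5
   = d (d (d (v 0))) + v 0 * d (v 0) *+ 6 + d (v 1%N) *+ 3.
Proof.
move=> hB hP b0 b1 b2 b3 b4 b5 h0 h1 h2 h3 h4 h5 /=; rewrite hB hP; expand.
rewrite ?b0 ?b1 ?b2 ?b3 ?b4 ?b5 ?h0 ?h1 ?h2 ?h3 ?h4 ?h5; dnorm; ring.
Qed.

Lemma commAL : coef (pcomm d (Aop d v 1) (Lop d v)) (-1)
   = d (d (d (v 0))) + v 0 * d (v 0) *+ 6 + d (v 1%N) *+ 3.
Proof.
have [b0 [b1 [b2 [b3 [b4 b5]]]]] := pcfA.
rewrite coef_pcomm (@coefE _ _ _ 5) // (@coefE _ _ _ 5) //.
exact: (commAL_gen (pordA d v) (pordL d v) b0 b1 b2 b3 b4 b5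
   (pcfL0 d v) (pcfL1 dM v) (pcfL2 dD dM v) (pcfL3 dD dM v) (pcfL4 dD dM v) (pcfL5 dD dM v)).
Qed.

Lemma relcoef (u : A) : coef (pcomm d (Lop d v) (pmul d (pmon A (-1)) (pconst u))) (-1) = d u.
Proof.
rewrite coef_pcomm (@coefE _ _ _ 1) // (@coefE _ _ _ 1) //.
move: (pcfL0 d v) (pcfL1 dM v) (pcfL2 dD dM v) (pordL d v).
move: (Lop d v) => P h0 h1 h2 hP /=; rewrite hP; expand; rewrite ?h0 ?h1 ?h2; dnorm; ring.
Qed.

Lemma mapcoef (e : A -> A) : coef (Defs.pmap e (Lop d v)) (-1) = e (v 0).
Proof. by rewrite (@coef_pmap _ _ _ _ 2) // (pcfL2 dD dM v). Qed.
End Gen3.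

Arguments coef : simpl never.

Section Two.
Variable A : comPzRingType.
Variables d e : A -> A.
Hypothesis dD : forall a b, d (a + b) = d a + d b.
Hypothesis dM : forall a b, d (a * b) = d a * b + a * d b.
Hypothesis eD : forall a b, e (a + b) = e a + e b.
Hypothesis eM : forall a b, e (a * b) = e a * b + a * e b.
Hypothesis de : forall a, d (e a) = e (d a).
Ltac dnorm := repeat progress (rewrite ?dD ?(dN dD) ?(dMz dD) ?(dMn dD) ?dM ?(d0 dD) ?(der1 dM)
   ?eD ?(dN eD) ?(dMz eD) ?(dMn eD) ?eM ?(d0 eD) ?(der1 eM) ?de).
Variables v w : nat -> A.

Section G.
Variables (B L : psd A).
Hypotheses (hB : pord B = 3) (c0 : coef B 0 = 0) (c1 : coef B 1 = w 0 *+ 3) (c2 : coef B 2 = 0)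
  (c3 : coef B 3 = 1).
Hypotheses (hL : pord L = 1) (h0 : pcf L 0 = 1) (h1 : pcf L 1 = 0) (h2 : pcf L 2 = v 0).
Let P := qcomm d e (poly2 B) (ser2 L).

Lemma P1k k : coef2 P 1 k = 0.
Proof.
rewrite /P coef2_qcomm.
case: (leqP k 3) => hk; last by rewrite !coef2_gtk ?subrr //= ?hB ?addn0.
rewrite (@coef2E _ _ _ _ 0); [ | rewrite /= ?hB ?addn0 //= | by rewrite /= hL].
rewrite (@coef2E _ _ _ _ 0); [ | rewrite /= ?hB ?addn0 //= | by rewrite /= hL]; rewrite /=.
rewrite hB ?hL; case: k hk => [|[|[|[|k]]]] // _; expand; rewrite ?c0 ?c1 ?c2 ?c3 ?h0 ?h1 ?h2; dnorm; ring.
Qed.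

Lemma P01 : coef2 P 0 1 = - d (w 0) *+ 3.
Proof.
rewrite /P coef2_qcomm.
rewrite (@coef2E _ _ _ _ 1); [ | rewrite /= ?hB ?addn0 //= | by rewrite /= hL].
rewrite (@coef2E _ _ _ _ 1); [ | rewrite /= ?hB ?addn0 //= | by rewrite /= hL]; rewrite /=.
rewrite hB ?hL; expand; rewrite ?c0 ?c1 ?c2 ?c3 ?h0 ?h1 ?h2; dnorm; ring.
Qed.

Lemma P0k k : (2 <= k)%N -> coef2 P 0 k = 0.
Proof.
move=> k2; rewrite /P coef2_qcomm.
case: (leqP k 3) => hk; last by rewrite !coef2_gtk ?subrr //= ?hB ?addn0.
rewrite (@coef2E _ _ _ _ 1); [ | rewrite /= ?hB ?addn0 //= | by rewrite /= hL].
rewrite (@coef2E _ _ _ _ 1); [ | rewrite /= ?hB ?addn0 //= | by rewrite /= hL]; rewrite /=.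
rewrite hB ?hL; case: k k2 hk => [|[|[|[|k]]]] // _ _; expand; rewrite ?c0 ?c1 ?c2 ?c3 ?h0 ?h1 ?h2; dnorm; ring.
Qed.

Lemma Pm10 : coef2 P (-1) 0 = e (e (e (v 0))) + w 0 * e (v 0) *+ 3.
Proof.
rewrite /P coef2_qcomm.
rewrite (@coef2E _ _ _ _ 2); [ | rewrite /= ?hB ?addn0 //= | by rewrite /= hL].
rewrite (@coef2E _ _ _ _ 2); [ | rewrite /= ?hB ?addn0 //= | by rewrite /= hL]; rewrite /=.
rewrite hB ?hL; expand; rewrite ?c0 ?c1 ?c2 ?c3 ?h0 ?h1 ?h2; dnorm; ring.
Qed.
End G.
End Two.

Section MH.
Variable A : comPzRingType.
Variables d e : A -> A.
Hypothesis dD : forall a b, d (a + b) = d a + d b.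
Hypothesis dM : forall a b, d (a * b) = d a * b + a * d b.
Hypothesis eD : forall a b, e (a + b) = e a + e b.
Hypothesis eM : forall a b, e (a * b) = e a * b + a * e b.
Variable u : A.

Lemma qcfH1 t : qcf (H2 u) t 1 = if t == 0%N then 1 else 0.
Proof. by case: t => [|[|t]]. Qed.
Lemma qcfH0 t : qcf (H2 u) t 0 = if t == 1%N then u else 0.
Proof. by case: t => [|[|t]]. Qed.

Lemma iter0 (f : A -> A) i : f 0 = 0 -> iter i f 0 = 0.
Proof. by move=> h; elim: i => //= i ->. Qed.

Lemma iter_de1 i j : iter i d (iter j e 1) = if (i == 0%N) && (j == 0%N) then 1 else 0.
Proof.
have E : forall j0, iter j0 e 1 = if j0 == 0%N then 1 else 0.
  by case=> [|j0] //; rewrite iterSr (der1 eM) iter0 ?(d0 eD).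
rewrite E; case: (j == 0%N); rewrite ?andbF ?andbT.
- by case: i => [|i] //; rewrite iterSr (der1 dM) iter0 ?(d0 dD).
- by rewrite iter0 ?if_same // (d0 dD).
Qed.

Lemma iter_de0 i j : iter i d (iter j e 0) = 0.
Proof. by rewrite (@iter0 e) ?(d0 eD) // (@iter0 d) ?(d0 dD). Qed.

Lemma binz_0 m : binz m 0 = 1.
Proof. by case: m => n /=; rewrite bin0 // expr0 mul1r. Qed.

Lemma sum_if_eq (N a : nat) (F : nat -> A) :
  \sum_(i < N) (if (i == a :> nat) then F i else 0) = if (a < N)%N then F a else 0.
Proof. by rewrite -big_mkcond big_ord1_eq. Qed.

Variable X : psd2 A.
Let n := qdeg X.
Let o := qord X.
Let c := qcf X.

Section PW.
Variables (s k sp i kp j : nat).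
Hypotheses (hsp : (sp < s.+1)%N) (hi : (i < s.+1 - sp)%N) (hkp : (kp < n.+1)%N) (hj : (j < kp.+1)%N).
Hypothesis ha : forall sp kp, (sp.+1 < s)%N -> (kp <= n)%N -> c sp kp = 0.
Hypothesis hb : forall kp, (0 < s)%N -> (k < kp)%N -> (kp <= n)%N -> c s.-1 kp = 0.

Lemma pw1 : (if (kp - j + 1 == k)%N then
     (c sp kp * iter i d (iter j e (if (s - sp - i == 0)%N then 1 else 0))) *~ (binz (o - Posz sp) i * ('C(kp, j))%:Z)
     else 0)
  = if j == 0%N then if kp.+1 == k then if i == 0%N then if sp == s then c sp kp else 0 else 0 else 0 else 0.
Proof.
case: (eqVneq (s - sp - i)%N 0%N) => h.
- rewrite iter_de1.
  case: (eqVneq i 0%N) => [hi0|hi0]; case: (eqVneq j 0%N) => [hj0|hj0] //=;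
    rewrite ?mulr0 ?mul0rz ?if_same //.
  subst i j; rewrite binz_0 bin0 mulr1 mulr1z subn0 addn1.
  have -> : sp = s by lia.
  by rewrite eqxx; case: ifP.
- rewrite iter_de0 mulr0 mul0rz if_same.
  case: (eqVneq j 0%N) => // _; case: ifP => // _; case: (eqVneq i 0%N) => // hi0.
  by case: (eqVneq sp s) => // hs; exfalso; move: h; rewrite hi0 hs; lia.
Qed.

Lemma pw0 : (if (kp - j + 0 == k)%N then
     (c sp kp * iter i d (iter j e (if (s - sp - i == 1)%N then u else 0))) *~ (binz (o - Posz sp) i * ('C(kp, j))%:Z)
     else 0)
  = if j == 0%N then if kp == k then if i == 0%N then if sp.+1 == s then c sp kp * u else 0 else 0 else 0 else 0.
Proof.
case: (eqVneq (s - sp - i)%N 1%N) => h.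
- case: (eqVneq i 0%N) => [hi0|hi0].
  + subst i; case: (eqVneq j 0%N) => [hj0|hj0].
    * subst j; rewrite /= binz_0 bin0 mulr1 mulr1z subn0 addn0.
      have -> : sp.+1 = s by lia.
      by rewrite eqxx; case: ifP.
    * case: ifP => // /eqP hk.
      have -> : sp = s.-1 by lia.
      by rewrite hb ?mul0r ?mul0rz //; rewrite /n; lia.
  + rewrite ha ?mul0r ?mul0rz ?if_same //; try lia.
- rewrite iter_de0 mulr0 mul0rz if_same.
  case: (eqVneq j 0%N) => // _; case: ifP => // _; case: (eqVneq i 0%N) => // hi0.
  by case: (eqVneq sp.+1 s) => // hs; exfalso; move: h; rewrite hi0 -hs; lia.
Qed.
End PW.
End MH.

Lemma qcf_qmul (A : comPzRingType) d e (P Q : psd2 A) s r : qcf (qmul d e P Q) s r =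
  \sum_(sp < s.+1) \sum_(i < s.+1 - sp) \sum_(kp < (qdeg P).+1) \sum_(j < kp.+1) \sum_(lq < (qdeg Q).+1)
    (if (kp - j + lq == r)%N then (qcf P sp kp * iter i d (iter j e (qcf Q (s - sp - i)%N lq)))
         *~ (binz (qord P - Posz sp) i * Posz 'C(kp, j)) else 0).
Proof. by []. Qed.

Lemma sum_if_eqc (A : comPzRingType) (N a : nat) (Y : A) :
  \sum_(i < N) (if (i == a :> nat) then Y else 0) = if (a < N)%N then Y else 0.
Proof. exact: (sum_if_eq N a (fun _ => Y)). Qed.

Section MH2.
Variable A : comPzRingType.
Variables d e : A -> A.
Hypothesis dD : forall a b, d (a + b) = d a + d b.
Hypothesis dM : forall a b, d (a * b) = d a * b + a * d b.
Hypothesis eD : forall a b, e (a + b) = e a + e b.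
Hypothesis eM : forall a b, e (a * b) = e a * b + a * e b.
Variable u : A.
Variable X : psd2 A.
Let n := qdeg X.
Let c := qcf X.

Lemma qcfXH s k : (k <= n.+1)%N ->
  (forall sp kp, (sp.+1 < s)%N -> (kp <= n)%N -> c sp kp = 0) ->
  (forall kp, (0 < s)%N -> (k < kp)%N -> (kp <= n)%N -> c s.-1 kp = 0) ->
  qcf (qmul d e X (H2 u)) s k =
   (if k is k'.+1 then c s k' else 0) + (if s is s'.+1 then (if (k <= n)%N then c s' k else 0) else 0) * u.
Proof.
move=> hk ha hb; rewrite qcf_qmul.
have -> : qdeg (H2 u) = 1%N by [].
rewrite (eq_bigr (fun sp : 'I_s.+1 => \sum_(i < s.+1 - sp) \sum_(kp < n.+1) \sum_(j < kp.+1)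
  ((if j == 0%N :> nat then if kp.+1 == k then if i == 0%N :> nat then if sp == s :> nat then c sp kp else 0 else 0 else 0 else 0)
  + (if j == 0%N :> nat then if kp == k :> nat then if i == 0%N :> nat then if sp.+1 == s then c sp kp * u else 0 else 0 else 0 else 0)))); last first.
  move=> sp _; apply: eq_bigr => i _; apply: eq_bigr => kp _; apply: eq_bigr => j _.
  rewrite big_ord_recl big_ord1.
  have -> : nat_of_ord (lift ord0 (ord0 : 'I_1)) = 1%N by [].
  have -> : nat_of_ord (ord0 : 'I_2) = 0%N by [].
  rewrite qcfH0 qcfH1 addrC.
  rewrite (pw1 dD dM eD eM); try exact: ltn_ord.
  by rewrite (pw0 dD eD); try exact: ltn_ord; try exact: ha; try exact: hb.
under eq_bigr => sp _ do under eq_bigr => i _ do under eq_bigr => kp _ do rewrite big_split.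
under eq_bigr => sp _ do under eq_bigr => i _ do rewrite big_split.
under eq_bigr => sp _ do rewrite big_split.
rewrite big_split /=.
congr (_ + _).
all: under eq_bigr => sp _ do under eq_bigr => i _ do under eq_bigr => kp _ do rewrite sum_if_eqc ltn0Sn.
- case: k hk hb => [|k'] hk hb.
  + rewrite big1 // => sp _; rewrite big1 // => i _; rewrite big1 //.
  + under eq_bigr => sp _ do under eq_bigr => i _ do under eq_bigr => kp _ do rewrite eqSS.
    under eq_bigr => sp _ do under eq_bigr => i _ do rewrite
       (sum_if_eq _ _ (fun kp => if i == 0%N :> nat then if sp == s :> nat then c sp kp else 0 else 0)) hk.
    under eq_bigr => sp _ do rewrite sum_if_eqc subn_gt0 ltn_ord.
    by rewrite (sum_if_eq _ _ (fun sp => c sp k')) ltnSn.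
- under eq_bigr => sp _ do under eq_bigr => i _ do rewrite
       (sum_if_eq _ _ (fun kp => if i == 0%N :> nat then if sp.+1 == s then c sp kp * u else 0 else 0)) ltnS.
  case hkn: (k <= n)%N; last first.
    rewrite big1; last by move=> sp _; rewrite big1.
    by case: (s); rewrite mul0r.
  under eq_bigr => sp _ do rewrite sum_if_eqc subn_gt0 ltn_ord.
  case: s ha hb => [|s'] ha hb.
  + by rewrite big1 // mul0r.
  + under eq_bigr => sp _ do rewrite eqSS.
    by rewrite (sum_if_eq _ _ (fun sp => c sp k * u)) ltnS leqnSn.
Qed.
End MH2.

Section MH3.
Variable A : comPzRingType.
Variables d e : A -> A.
Hypothesis dD : forall a b, d (a + b) = d a + d b.
Hypothesis dM : forall a b, d (a * b) = d a * b + a * d b.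
Hypothesis eD : forall a b, e (a + b) = e a + e b.
Hypothesis eM : forall a b, e (a * b) = e a * b + a * e b.
Variable u : A.
Variable X : psd2 A.

Lemma coef2XH m k :
  (forall m' j, m < m' -> coef2 X m' j = 0) ->
  (forall j, (k < j)%N -> coef2 X m j = 0) ->
  coef2 (qmul d e X (H2 u)) m k = (if k is k'.+1 then coef2 X (m - 1) k' else 0) + coef2 X m k * u.
Proof.
move=> h1 h2.
have cE mm kk ss : (kk <= qdeg X)%N -> qord X - mm = Posz ss -> qcf X ss kk = coef2 X mm kk.
  by move=> a b; rewrite (coef2E a b).
case: (leqP k (qdeg X).+1) => hk; last first.
  rewrite (@coef2_gtk _ _ m k); last by rewrite /=; lia.
  rewrite (@coef2_gtk _ X m k); last by lia.
  case: k hk h2 => [|k'] hk h2 //; rewrite (@coef2_gtk _ X _ k') ?mul0r ?addr0 //; lia.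
case: (ltP (qord X + 1) m) => ho.
  rewrite (@coef2_gt _ _ m k); last by rewrite /=; lia.
  rewrite (@coef2_gt _ X m k); last by lia.
  case: k hk h2 => [|k'] hk h2; rewrite ?(@coef2_gt _ X (m - 1)) ?mul0r ?addr0 //; lia.
have [s hs] : exists s : nat, (qord X + 1 - m)%R = Posz s.
  by exists (absz (qord X + 1 - m)%R); lia.
rewrite (@coef2E _ _ _ _ s); last exact: hs; last by rewrite /= addn1.
rewrite (qcfXH dD dM eD eM).
- congr (_ + _).
  + case: k hk h2 => [|k'] hk h2 //; apply: cE; lia.
  + case: s hs => [|s'] hs.
      by rewrite coef2_gt ?mul0r //; lia.
    case: ifP => hkn; last by rewrite coef2_gtk ?mul0r //; lia.
    by rewrite (cE m k s') //; lia.
- exact: hk.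
- move=> sp kp hsp hkp; rewrite (cE (qord X - Posz sp) kp sp) //; first (apply: h1; lia).
  lia.
- move=> kp hs0 hkp hkn; rewrite (cE m kp s.-1) //; first (apply: h2; lia).
  lia.
Qed.
End MH3.

Section Main.
Variable A : comPzRingType.
Variables (d1 d2 : A -> A) (u : A) (v w : nat -> A) (D11 D21 : A -> A).
Hypotheses (d1D : forall a b, d1 (a + b) = d1 a + d1 b) (d1M : forall a b, d1 (a * b) = d1 a * b + a * d1 b).
Hypotheses (d2D : forall a b, d2 (a + b) = d2 a + d2 b) (d2M : forall a b, d2 (a * b) = d2 a * b + a * d2 b).
Hypothesis hd12 : forall a, d1 (d2 a) = d2 (d1 a).
Hypothesis (hf : lax_flow d2 d1 u w v D21 1).

Lemma D21v0 : D21 (v 0%N) = d2 (d2 (d2 (v 0%N))) + w 0%N * d2 (v 0%N) *+ 3 + d1 (w 0%N) * u *+ 3.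
Proof.
case: hf => _ [Q [[X hX] hQ]] _.
set Pp := qcomm d1 d2 (poly2 (Aop d2 w 1)) (ser2 (Lop d1 v)) in hX.
have [c0 c1 c2 c3] := coefA d2D d2M w.
have hA := pordA d2 w; have hL := pordL d1 v; have h0 := pcfL0 d1 v; have h1 := pcfL1 d1M v;
have h2 := pcfL2 d1D d1M v.
have p1 : forall k, coef2 Pp 1 k = 0.
  by move=> k; apply: P1k; try eassumption.
have p01 : coef2 Pp 0 1 = - d1 (w 0%N) *+ 3.
  by apply: P01; try eassumption.
have p0k : forall k, (2 <= k)%N -> coef2 Pp 0 k = 0.
  by move=> k hk; apply: P0k; try eassumption.
have pm : coef2 Pp (-1) 0 = d2 (d2 (d2 (v 0%N))) + w 0%N * d2 (v 0%N) *+ 3.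
  by apply: Pm10; try eassumption.
have qP : qord Pp = 1 by [].
have E m k : coef2 Pp m k = coef2 (ser2 Q) m k + coef2 (qmul d1 d2 X (H2 u)) m k.
  by rewrite hX coef2_qadd.
have Pz (m : int) (k : nat) : 1 <= m -> coef2 Pp m k = 0.
  move=> hm; have [h|->] : 1 < m \/ m = 1 by lia.
    by rewrite coef2_gt // qP.
  exact: p1.
have Z : forall (t : nat) (m : int) (j : nat), 0 <= m -> qord X - m < Posz t -> coef2 X m j = 0.
  elim=> [|t IH] m j hm ht; first by rewrite coef2_gt //; lia.
  have [hlt|hlt] : qord X - m < Posz t \/ qord X - m = Posz t by lia.
    exact: IH.
  have := E (m + 1) j.+1.
  rewrite Pz; last by lia.
  rewrite coef2_ser2_S add0r (coef2XH d1D d1M d2D d2M); first last.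
  - by move=> j' hj'; apply: IH; lia.
  - by move=> m' j' hm'; apply: IH; lia.
  rewrite (IH (m + 1) j.+1); [|lia|lia].
  by rewrite addrK mul0r addr0 => ->.
have Z' (m : int) (j : nat) : 0 <= m -> coef2 X m j = 0.
  by move=> hm; apply: (Z (absz (qord X - m)).+1) => //; lia.
have B j : coef2 X (-1) j = coef2 Pp 0 j.+1.
  rewrite E coef2_ser2_S add0r (coef2XH d1D d1M d2D d2M); first last.
  - by move=> j' hj'; apply: Z'.
  - by move=> m' j' hm'; apply: Z'; lia.
  by rewrite (Z' 0 j.+1) // mul0r addr0 sub0r.
have := E (-1) 0.
rewrite coef2_ser2_0 (coef2XH d1D d1M d2D d2M); first last.
- by move=> j' hj'; rewrite B p0k.
- by move=> m' j' hm'; apply: Z'; lia.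
rewrite B p01 pm -hQ (mapcoef d1D d1M v D21) => ->.
rewrite /=; ring.
Qed.
End Main.

Theorem mainTheorem9 (R : realType) (A : comAlgType R[i])
    (d1 d2 : A -> A) (u : A) (v w : nat -> A) (tau : A -> A)
    (D11 D21 : A -> A)
    (* d1, d2 : commuting C-linear derivations *)
    (hd1 : is_derivation d1) (hd2 : is_derivation d2)
    (hd12 : forall a, d1 (d2 a) = d2 (d1 a))
    (* defining relations of the algebra *)
    (hrel1 : lax_relation d1 d2 u v)   (* d2(L1) = [L1, d1^{-1} u] *)
    (hrel2 : lax_relation d2 d1 u w)   (* d1(L2) = [L2, d2^{-1} u] *)
    (* tau : R-algebra involution, conjugating scalars, acting on generators *)
    (htau_add : forall a b, tau (a + b) = tau a + tau b)
    (htau_mul : forall a b, tau (a * b) = tau a * tau b)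
    (htau_1 : tau 1 = 1)
    (htau_scal : forall (c : R[i]) a, tau (c *: a) = c^* *: tau a)
    (htau_inv : forall a, tau (tau a) = a)
    (htau_v : forall i n, tau (iter n d1 (v i)) = iter n d2 (w i))
    (htau_w : forall j n, tau (iter n d2 (w j)) = iter n d1 (v j))
    (htau_u : forall p q, tau (iter p d1 (iter q d2 u)) = iter q d1 (iter p d2 u))
    (* d/dt_{1,1} and d/dt_{2,1} : evolutionary derivations defined by the Lax equations *)
    (hD11 : is_derivation D11) (hD21 : is_derivation D21)
    (hD11c : forall a, D11 (d1 a) = d1 (D11 a) /\ D11 (d2 a) = d2 (D11 a))
    (hD21c : forall a, D21 (d1 a) = d1 (D21 a) /\ D21 (d2 a) = d2 (D21 a))
    (hflow11 : lax_flow d1 d2 u v w D11 1)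
    (hflow21 : lax_flow d2 d1 u w v D21 1) :
  (* d/dt_1 = d/dt_{1,1} + d/dt_{2,1} *)
  D11 u + D21 u
    = iter 3 d1 u + iter 3 d2 u + 3 * d1 (v 0%N * u) + 3 * d2 (w 0%N * u)
  /\ D11 (v 0%N) + D21 (v 0%N)
    = iter 3 d1 (v 0%N) + iter 3 d2 (v 0%N) + 6 * v 0%N * d1 (v 0%N)
      + 3 * d1 (u * w 0%N) + 3 * d1 (v 1%N)
  /\ d2 (v 0%N) = d1 u
  /\ d1 (w 0%N) = d2 u
  /\ w 0%N = tau (v 0%N)
  /\ (let vv := 3 * v 0%N in
      tau vv = 3 * w 0%N
      /\ D11 u + D21 u
         = iter 3 d1 u + iter 3 d2 u + d1 (u * vv) + d2 (u * tau vv)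
      /\ 3 * d1 u = d2 vv).
Proof.
case: (hd1) => d1D d1M _; case: (hd2) => d2D d2M _.
have hv : d2 (v 0%N) = d1 u.
  by have := hrel1 (-1); rewrite (mapcoef d1D d1M v d2) (relcoef d1D d1M v u).
have hw : d1 (w 0%N) = d2 u.
  by have := hrel2 (-1); rewrite (mapcoef d2D d2M w d1) (relcoef d2D d2M w u).
have [f1 _ f3] := hflow11.
have [g1 _ g3] := hflow21.
rewrite (padjA d1D d1M v u) opprK in f3.
rewrite (padjA d2D d2M w u) opprK in g3.
have f1v := f1 (-1); rewrite (mapcoef d1D d1M v D11) (commAL d1D d1M v) in f1v.
have g1v := @D21v0 _ d1 d2 u v w D21 d1D d1M d2D d2M hd12 hflow21.
have tw : tau (v 0%N) = w 0%N by have := htau_v 0%N 0%N.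
have t3 : tau 3 = 3 by rewrite (dMn htau_add) htau_1.
have d13 : d1 3 = 0 by rewrite (dMn d1D) (der1 d1M) mul0rn.
have d23 : d2 3 = 0 by rewrite (dMn d2D) (der1 d2M) mul0rn.
have e1 : D11 u + D21 u
    = iter 3 d1 u + iter 3 d2 u + 3 * d1 (v 0%N * u) + 3 * d2 (w 0%N * u).
  by rewrite f3 g3 /=; ring.
split; first exact: e1.
split.
  rewrite f1v g1v /= hv d1M; ring.
split; first exact: hv.
split; first exact: hw.
split; first by rewrite tw.
cbv zeta.
have tv : tau (3 * v 0%N) = 3 * w 0%N by rewrite htau_mul t3 tw.
split; first exact: tv.
split.
  by rewrite tv e1 !d1M !d2M d13 d23; ring.
by rewrite d2M d23 hv; ring.
Qed.
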